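(* Let $K$ be a field, $s\ge2$, $S=K[t_1,\ldots,t_s]$ with each $t_i$ of degree $1$, and let $\mathcal{L}\subset\mathbb{Z}^s$ be a lattice such that $I(\mathcal{L})$ is a graded ideal with $\dim S/I(\mathcal{L})=1$. Then $\mathbb{Z}^s/\mathcal{L}$ is torsion-free if and only if $I(\mathcal{L})=(t_1-t_s,\ldots,t_{s-1}-t_s)$.
   Context: A lattice is a subgroup of $\mathbb{Z}^s$. For $a\in\mathbb{Z}^s$ write $a=a^+-a^-$ with $a^+,a^-\in\mathbb{N}^s$ of disjoint supports, $t^c=t_1^{c_1}\cdots t_s^{c_s}$; $I(\mathcal{L})=(\{t^{a^+}-t^{a^-}:a\in\mathcal{L}\})$. Graded means generated by homogeneous polynomials; $\dim$ is Krull dimension. *)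

(* Defs.v *)
From mathcomp Require Import all_boot all_order all_algebra.
From mathcomp Require Import mpoly.
Set Implicit Arguments. Unset Strict Implicit. Unset Printing Implicit Defensive.
Import GRing.Theory Num.Theory.
Local Open Scope ring_scope.

Definition is_lattice (s : nat) (L : 'rV[int]_s -> Prop) : Prop :=
  L 0 /\ (forall a b, L a -> L b -> L (a - b)).

Definition posn (z : int) : nat := match z with Posz n => n | Negz _ => 0%N end.
Definition negn (z : int) : nat := match z with Posz _ => 0%N | Negz n => n.+1 end.

Definition tpos (K : fieldType) (s : nat) (a : 'rV[int]_s) : {mpoly K[s]} :=
  \prod_(i < s) 'X_i ^+ posn (a 0 i).
Definition tneg (K : fieldType) (s : nat) (a : 'rV[int]_s) : {mpoly K[s]} :=
  \prod_(i < s) 'X_i ^+ negn (a 0 i).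

Definition ideal_gen (K : fieldType) (s : nat) (G : {mpoly K[s]} -> Prop)
  (p : {mpoly K[s]}) : Prop :=
  exists (r : seq ({mpoly K[s]} * {mpoly K[s]})),
    (forall cg, cg \in r -> G cg.2) /\ p = \sum_(cg <- r) cg.1 * cg.2.

Definition lattice_ideal (K : fieldType) (s : nat) (L : 'rV[int]_s -> Prop) :
  {mpoly K[s]} -> Prop :=
  ideal_gen (fun p => exists a, L a /\ p = tpos K a - tneg K a).

Definition homogeneous (K : fieldType) (s : nat) (p : {mpoly K[s]}) : Prop :=
  exists d : nat, p \is d.-homog.

Definition graded_ideal (K : fieldType) (s : nat) (I : {mpoly K[s]} -> Prop) : Prop :=
  exists G : {mpoly K[s]} -> Prop,
    (forall g, G g -> homogeneous g) /\ (forall p, I p <-> ideal_gen G p).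

Definition is_ideal (K : fieldType) (s : nat) (P : {mpoly K[s]} -> Prop) : Prop :=
  P 0 /\ (forall p q, P p -> P q -> P (p + q)) /\ (forall c p, P p -> P (c * p)).

Definition is_prime_ideal (K : fieldType) (s : nat) (P : {mpoly K[s]} -> Prop) : Prop :=
  is_ideal P /\ ~ P 1 /\ (forall p q, P (p * q) -> P p \/ P q).

(** A chain P_0 ⊊ P_1 ⊊ ... ⊊ P_n of prime ideals of S containing I,
    i.e. a chain of length n of prime ideals of S/I. *)
Definition prime_chain_over (K : fieldType) (s : nat) (I : {mpoly K[s]} -> Prop)
  (n : nat) : Prop :=
  exists P : nat -> {mpoly K[s]} -> Prop,
    (forall k, (k <= n)%N -> is_prime_ideal (P k) /\ (forall p, I p -> P k p)) /\
    (forall k, (k < n)%N ->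
       (forall p, P k p -> P k.+1 p) /\ exists p, P k.+1 p /\ ~ P k p).

Definition krull_dim_quot (K : fieldType) (s : nat) (I : {mpoly K[s]} -> Prop)
  (n : nat) : Prop :=
  prime_chain_over I n /\ ~ prime_chain_over I n.+1.

Definition torsion_free_quot (s : nat) (L : 'rV[int]_s -> Prop) : Prop :=
  forall (v : 'rV[int]_s) (m : int), m != 0 -> L (m *: v) -> L v.

(** The generators t_i - t_s, 1 <= i <= s-1 (indices 0-based: i < s-1, j = s-1). *)
Definition diff_gens (K : fieldType) (s : nat) (p : {mpoly K[s]}) : Prop :=
  exists i j : 'I_s, (val i < s.-1)%N /\ val j = s.-1 /\ p = 'X_i - 'X_j.

(* Main.v *)
From Pilot Require Import Defs.
From mathcomp Require Import all_boot all_order all_algebra.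
From mathcomp Require Import mpoly.
From Stdlib Require Import Classical ClassicalEpsilon.
From mathcomp Require Import zify ring.
Import Pilot.Defs.
Set Implicit Arguments. Unset Strict Implicit. Unset Printing Implicit Defensive.
Import Order.TTheory GRing.Theory Num.Theory.
Local Open Scope ring_scope.
Lemma aux_frac (x y p : rat) : y != 0 -> x * p = y * p * (x / y).
Proof. by move=> y0; rewrite [y * p]mulrC -mulrA [y * _]mulrC -mulrA mulVf ?mulr1 // mulrC. Qed.

Lemma denom_clear (I : finType) (f : I -> rat) :
  exists D : int, D != 0 /\ exists z : I -> int, forall i, (z i)%:~R = D%:~R * f i.
Proof.
exists (\prod_i denq (f i)); split.
  by apply/prodf_neq0 => i _; rewrite denq_neq0.
exists (fun i => numq (f i) * \prod_(j | j != i) denq (f j)) => i.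
rewrite [in RHS](bigD1 i) //= !intrM rmorph_prod /=.
have E : f i = (numq (f i))%:~R / (denq (f i))%:~R by rewrite divq_num_den.
set n := numq (f i); set d := denq (f i); set P := \prod_(_ | _) _.
rewrite E -/n -/d; apply: aux_frac; by rewrite intr_eq0 denq_neq0.
Qed.

Section Lat.
Variables (s : nat) (L : 'rV[int]_s -> Prop) (hL : is_lattice L).

Lemma lat0 : L 0. Proof. by case: hL. Qed.
Lemma latB a b : L a -> L b -> L (a - b). Proof. by case: hL => _; apply. Qed.
Lemma latN a : L a -> L (- a).
Proof. by move=> La; rewrite -sub0r; apply: latB => //; apply: lat0. Qed.
Lemma latD a b : L a -> L b -> L (a + b).
Proof. by move=> La Lb; rewrite -[b]opprK; apply: latB => //; apply: latN. Qed.
Lemma latZ (z : int) a : L a -> L (z *: a).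
Proof.
move=> La; have Hn : forall n : nat, L (n%:Z *: a).
  elim=> [|n IH]; first by rewrite scale0r; apply: lat0.
  have -> : Posz n.+1 = n%:Z + 1 by rewrite -PoszD addn1.
  by rewrite scalerDl scale1r; apply: latD.
by case: z => n; rewrite ?NegzE ?scaleNr; [apply: Hn | apply: latN; apply: Hn].
Qed.
Lemma latsum (I : Type) (r : seq I) (F : I -> 'rV[int]_s) :
  (forall i, L (F i)) -> L (\sum_(i <- r) F i).
Proof.
move=> HF; elim: r => [|x r IH]; first by rewrite big_nil; apply: lat0.
by rewrite big_cons; apply: latD.
Qed.
Lemma latmul k (z : 'rV[int]_k) (A : 'M[int]_(k, s)) :
  (forall i, L (row i A)) -> L (z *m A).
Proof.
move=> HA; rewrite mulmx_sum_row; apply: latsum => i; exact: latZ.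
Qed.

Lemma ex_max (P : nat -> Prop) b n0 : P n0 -> (forall n, P n -> (n <= b)%N) ->
  exists m, P m /\ forall n, P n -> (n <= m)%N.
Proof.
move=> Pn0 Hb.
suff H : forall d n, (b - n <= d)%N -> P n -> exists m, P m /\ forall n, P n -> (n <= m)%N.
  exact: (H (b - n0)%N n0).
elim=> [|d IH] n hd Pn.
  exists n; split => // n' Pn'; have := Hb _ Pn'; move: hd; rewrite leqn0 subn_eq0.
  by move=> h1 h2; apply: leq_trans h2 h1.
case: (classic (forall n', P n' -> (n' <= n)%N)) => [H|H]; first by exists n.
have [n' ] : exists n', P n' /\ (n < n')%N.
  apply: NNPP => H'; apply: H => n' Pn'; rewrite leqNgt; apply/negP => lt.
  by apply: H'; exists n'.
move=> [Pn' lt]; apply: (IH n') => //.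
have := Hb _ Pn'; move: hd lt; clear; lia.
Qed.

Lemma LA (v : 'rV[int]_s) : (forall m : int, m != 0 -> ~ L (m *: v)) ->
  exists c : 'I_s -> int, (forall a, L a -> \sum_j a 0 j * c j = 0) /\
                          \sum_j v 0 j * c j != 0.
Proof.
move=> Hv.
pose Q r := exists k (A : 'M[int]_(k, s)), (forall i, L (row i A)) /\
              \rank (map_mx (fun x : int => x%:~R : rat) A) = r.
have Q0 : Q 0%N.
  exists 0%N, 0; split; first by case.
  by apply/eqP; rewrite -leqn0 rank_leq_row.
have Qb : forall r, Q r -> (r <= s)%N by move=> r [k [A [_ <-]]]; apply: rank_leq_col.
have [r [[k [A [AL rk]]] rmax]] := ex_max Q0 Qb.
set M := map_mx _ A in rk.
have Lsub : forall a, L a -> (map_mx (fun x : int => x%:~R : rat) a <= M)%MS.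
  move=> a La; set w := map_mx _ a.
  have QC : Q (\rank (col_mx M w)).
    exists (k + 1)%N, (col_mx A a); split; last by rewrite map_col_mx.
    move=> i; rewrite -(splitK i); case: (split i) => j /=; first by rewrite rowKu.
    rewrite rowKd; have -> : row j a = a by apply/rowP => t; rewrite !mxE (ord1 j).
    exact: La.
  have MC : (M <= col_mx M w)%MS by rewrite -addsmxE addsmxSl.
  have [le E] := mxrank_leqif_sup MC.
  have CM : (col_mx M w <= M)%MS.
    by rewrite -E eqn_leq le /= rk; apply: rmax.
  by apply: submx_trans CM; rewrite -addsmxE addsmxSr.
have wnot : ~~ (map_mx (fun x : int => x%:~R : rat) v <= M)%MS.
  apply/negP => /submxP [x Ex].
  have [D [D0 [z Ez]]] := denom_clear (x 0).
  apply: (Hv D D0).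
  have -> : D *: v = (\row_i z i) *m A.
    apply/matrixP => i j; apply/(@intr_inj rat).
    have := congr1 (fun X : 'rV[rat]_s => (D%:~R *: X) i j) Ex.
    rewrite !mxE; rewrite intrM => ->; rewrite rmorph_sum mulr_sumr /=.
    apply: eq_bigr => t _; rewrite !mxE (ord1 i) intrM Ez mulrA //.
  exact: latmul.
rewrite submxE in wnot.
have [j Hj] : exists j, (map_mx (fun x : int => x%:~R : rat) v *m cokermx M) 0 j != 0.
  apply: NNPP => H; move/negP: wnot; apply; apply/eqP/rowP => j.
  rewrite [RHS]mxE; apply: NNPP => H2; apply: H; exists j; apply/eqP => E; exact: H2 E.
have [D [D0 [c Ec]]] := denom_clear (fun t => cokermx M t j).
exists c; split.
  move=> a La; apply/(@intr_inj rat); rewrite rmorph0 rmorph_sum /=.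
  have := Lsub a La; rewrite submxE => /eqP/matrixP/(_ 0 j); rewrite !mxE => E.
  transitivity (D%:~R * \sum_t (a 0 t)%:~R * cokermx M t j : rat).
    rewrite mulr_sumr; apply: eq_bigr => t _; rewrite intrM Ec mulrCA //.
  rewrite (eq_bigr (fun t => (map_mx (fun x : int => x%:~R : rat) a) 0 t * cokermx M t j)) ?E ?mulr0 //.
  by move=> t _; rewrite [in RHS]mxE.
apply/negP => /eqP E; move: Hj; apply/negP; rewrite negbK.
have : (\sum_j0 v 0 j0 * c j0)%:~R = 0 :> rat by rewrite E.
rewrite rmorph_sum /= mxE.
rewrite (eq_bigr (fun t => D%:~R * ((map_mx (fun x : int => x%:~R : rat) v) 0 t * cokermx M t j))).
  by rewrite -mulr_sumr => /eqP; rewrite mulf_eq0 intr_eq0 (negbTE D0).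
by move=> t _; rewrite intrM Ec [in RHS]mxE mulrCA.
Qed.
End Lat.
Section Ideals.
Variables (K : fieldType) (s : nat).
Implicit Types (G P : {mpoly K[s]} -> Prop) (p q : {mpoly K[s]}).

Lemma ideal_gen_ideal G : is_ideal (ideal_gen G).
Proof.
split; [|split].
- by exists [::]; rewrite big_nil.
- move=> p q [r1 [H1 ->]] [r2 [H2 ->]]; exists (r1 ++ r2); split; last by rewrite big_cat.
  by move=> cg; rewrite mem_cat => /orP[]; [apply: H1 | apply: H2].
- move=> c p [r [H ->]]; exists [seq (c * cg.1, cg.2) | cg <- r]; split.
    by move=> cg /mapP [x xr ->] /=; apply: H.
  by rewrite big_map mulr_sumr; apply: eq_bigr => cg _; rewrite mulrA.
Qed.

Lemma ideal_gen_in G g : G g -> ideal_gen G g.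
Proof.
by move=> Gg; exists [:: (1, g)]; split; [move=> cg; rewrite inE => /eqP -> | rewrite big_seq1 mul1r].
Qed.

Lemma ideal_gen_min G P : is_ideal P -> (forall g, G g -> P g) ->
  forall p, ideal_gen G p -> P p.
Proof.
move=> [P0 [PD PM]] HG p [r [H ->]]; elim: r H => [|cg r IH] H; first by rewrite big_nil.
rewrite big_cons; apply: PD; first by apply: PM; apply: HG; apply: H; rewrite inE eqxx.
by apply: IH => x xr; apply: H; rewrite inE xr orbT.
Qed.

Lemma idealN P p : is_ideal P -> P p -> P (- p).
Proof. by move=> [_ [_ PM]] Pp; rewrite -mulN1r; apply: PM. Qed.
Lemma idealB P p q : is_ideal P -> P p -> P q -> P (p - q).
Proof. by move=> hP Pp Pq; case: (hP) => _ [PD _]; apply: PD => //; apply: idealN. Qed.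

Lemma ker_prime (D : idomainType) (phi : {rmorphism {mpoly K[s]} -> D}) :
  is_prime_ideal (fun p => phi p = 0).
Proof.
split; [split; [|split]|split].
- exact: rmorph0.
- by move=> p q /= hp hq; rewrite rmorphD hp hq addr0.
- by move=> c p /= hp; rewrite rmorphM hp mulr0.
- by rewrite rmorph1; apply/eqP; rewrite oner_eq0.
- by move=> p q /=; rewrite rmorphM => /eqP; rewrite mulf_eq0 => /orP[]/eqP; [left|right].
Qed.

Lemma rmorph_tpos (T : comRingType) (phi : {rmorphism {mpoly K[s]} -> T}) a :
  phi (tpos K a) = \prod_i (phi 'X_i) ^+ posn (a 0 i).
Proof. by rewrite /tpos rmorph_prod; apply: eq_bigr => i _; rewrite rmorphXn. Qed.
Lemma rmorph_tneg (T : comRingType) (phi : {rmorphism {mpoly K[s]} -> T}) a :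
  phi (tneg K a) = \prod_i (phi 'X_i) ^+ negn (a 0 i).
Proof. by rewrite /tneg rmorph_prod; apply: eq_bigr => i _; rewrite rmorphXn. Qed.

Definition ev1 := meval (fun _ : 'I_s => (1 : K)).
Definition phix (p : {mpoly K[s]}) : {poly K} := mmap (@polyC K) (fun _ => 'X) p.

Lemma phixX i : (phix : {rmorphism _ -> _}) 'X_i = 'X.
Proof. by rewrite /= /phix [LHS]mmapX mmap1U. Qed.


Lemma phix_homog g d : g \is d.-homog -> phix g = (ev1 g)%:P * 'X^d.
Proof.
move=> /dhomogP hg; rewrite /phix /mmap /ev1 mevalE rmorph_sum mulr_suml.
by apply: eq_big_seq => m hm; rewrite /mmap1 !prodrXr -mdegE hg // expr1n mulr1.
Qed.

Lemma sum_posz (I : Type) (r : seq I) (F : I -> nat) :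
  \sum_(i <- r) (F i)%:Z = (\sum_(i <- r) F i)%N%:Z.
Proof.
elim: r => [|x r IH]; first by rewrite !big_nil.
by rewrite !big_cons IH PoszD.
Qed.

Lemma posn_negn (z : int) : z = (posn z)%:Z - (negn z)%:Z.
Proof. by case: z => n /=; rewrite ?subr0 // NegzE sub0r. Qed.

Lemma sum_posn_negn (a : 'rV[int]_s) :
  \sum_i a 0 i = (\sum_i posn (a 0%R i))%N%:Z - (\sum_i negn (a 0%R i))%N%:Z.
Proof.
by rewrite -!sum_posz -sumrB; apply: eq_bigr => i _; rewrite -posn_negn.
Qed.

Lemma lat_sum0 (L : 'rV[int]_s -> Prop) (hgr : graded_ideal (@lattice_ideal K s L))
  a : L a -> \sum_i a 0 i = 0.
Proof.
move=> La; case: hgr => G [HG HI].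
have kerI : forall (D : idomainType) (phi : {rmorphism {mpoly K[s]} -> D}),
    (forall g, G g -> phi g = 0) -> forall p, @lattice_ideal K s L p -> phi p = 0.
  move=> D phi hG p /HI; exact: (ideal_gen_min (ker_prime phi).1 hG).
have ev1I : forall p, @lattice_ideal K s L p -> ev1 p = 0.
  move=> p Ip; have H := ideal_gen_min (ker_prime (ev1)).1. apply: H Ip => g [b [_ ->]] /=; rewrite rmorphB /= rmorph_tpos rmorph_tneg.
  by rewrite !big1 ?subrr // => i _; rewrite /= mevalXU expr1n.
have GI : forall g, G g -> @lattice_ideal K s L g by move=> g Gg; apply/HI; apply: ideal_gen_in.
have : (phix : {rmorphism _ -> _}) (tpos K a - tneg K a) = 0.
  apply: kerI; last by apply: ideal_gen_in; exists a.
  move=> g Gg; have [d hd] := HG g Gg.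
  by apply: (etrans (phix_homog hd)); rewrite (ev1I g (GI g Gg)) mul0r.
rewrite rmorphB /= rmorph_tpos rmorph_tneg.
under eq_bigr do rewrite phixX.
under [X in _ - X]eq_bigr do rewrite phixX.
rewrite !prodrXr => /eqP; rewrite subr_eq0 => /eqP E0; have := congr1 (fun q : {poly K} => size q) E0; rewrite /= !size_polyXn => -[E].
by rewrite sum_posn_negn E subrr.
Qed.
End Ideals.

Section Gens.
Variables (K : fieldType) (s : nat) (hs : (2 <= s)%N).
Local Notation J := (ideal_gen (@diff_gens K s)).

Lemma jn_lt : (s.-1 < s)%N. Proof. by move: hs; clear; lia. Qed.
Definition jn : 'I_s := Ordinal jn_lt.

Lemma J_ideal : is_ideal J. Proof. exact: ideal_gen_ideal. Qed.

Lemma XJ i : J ('X_i - 'X_jn).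
Proof.
have [->|ne] := eqVneq i jn; first by rewrite subrr; case: J_ideal.
apply: ideal_gen_in; exists i, jn; split => //.
have := ltn_ord i; move: ne; rewrite -(inj_eq val_inj) /= => ne.
by move: ne => /eqP; clear; lia.
Qed.

Lemma powJ (x y : {mpoly K[s]}) k : J (x - y) -> J (x ^+ k - y ^+ k).
Proof.
move=> Hxy; elim: k => [|k IH]; first by rewrite !expr0 subrr; case: J_ideal.
have -> : x ^+ k.+1 - y ^+ k.+1 = x * (x ^+ k - y ^+ k) + y ^+ k * (x - y).
  by rewrite !exprS; ring.
case: J_ideal => _ [JD JM]; apply: JD; exact: JM.
Qed.

Lemma prodJ (I : Type) (r : seq I) (F : I -> {mpoly K[s]}) (k : I -> nat) y :
  (forall i, J (F i - y ^+ k i)) ->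
  J (\prod_(i <- r) F i - y ^+ (\sum_(i <- r) k i)%N).
Proof.
move=> HF; elim: r => [|x r IH]; first by rewrite !big_nil expr0 subrr; case: J_ideal.
rewrite !big_cons exprD.
set p := F x; set q := \prod_(j <- r) F j; set u := y ^+ k x; set v := y ^+ _.
have -> : p * q - u * v = p * (q - v) + v * (p - u).
  by ring.
case: J_ideal => _ [JD JM]; apply: JD; apply: JM => //; exact: HF.
Qed.

Lemma binJ (a : 'rV[int]_s) : \sum_i a 0 i = 0 -> J (tpos K a - tneg K a).
Proof.
rewrite sum_posn_negn => /eqP; rewrite subr_eq0 => /eqP [E].
have -> : tpos K a - tneg K a =
  (tpos K a - 'X_jn ^+ (\sum_i posn (a 0%R i))%N) - (tneg K a - 'X_jn ^+ (\sum_i negn (a 0%R i))%N).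
  by rewrite E opprB addrA subrK.
apply: idealB; first exact: J_ideal.
  by apply: prodJ => i; apply: powJ; apply: XJ.
by apply: prodJ => i; apply: powJ; apply: XJ.
Qed.
End Gens.

Lemma zaux (V : zmodType) (x p q u : V) : x + p - u - (x + q - u) = p - q.
Proof. by rewrite opprB addrA subrK opprD addrA [x + p]addrC addrK. Qed.

Section Psi.
Variables (K : fieldType) (s : nat) (L : 'rV[int]_s -> Prop) (hL : is_lattice L)
  (hsum : forall a, L a -> \sum_i a 0 i = 0).

Definition mpos (a : 'rV[int]_s) : 'X_{1..s} := [multinom posn (a 0%R i) | i < s].
Definition mneg (a : 'rV[int]_s) : 'X_{1..s} := [multinom negn (a 0%R i) | i < s].
Definition vec (m : 'X_{1..s}) : 'rV[int]_s := \row_i (m i)%:Z.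

Lemma tposE a : tpos K a = 'X_[mpos a].
Proof. by rewrite mpolyXE_id /tpos; apply: eq_bigr => i _; rewrite mnmE. Qed.
Lemma tnegE a : tneg K a = 'X_[mneg a].
Proof. by rewrite mpolyXE_id /tneg; apply: eq_bigr => i _; rewrite mnmE. Qed.

Lemma vecD m1 m2 : vec (m1 + m2) = vec m1 + vec m2.
Proof. by apply/rowP => i; rewrite !mxE mnmDE PoszD. Qed.
Lemma vec_posneg a : vec (mpos a) - vec (mneg a) = a.
Proof. by apply/rowP => i; rewrite !mxE !mnmE -posn_negn. Qed.

Definition dec (P : Prop) : bool := if excluded_middle_informative P then true else false.
Lemma decP (P : Prop) : dec P <-> P.
Proof. by rewrite /dec; case: excluded_middle_informative. Qed.

Definition psi (u : 'X_{1..s}) (D : nat) (f : {mpoly K[s]}) : K :=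
  \sum_(m : 'X_{1..s < D}) (if dec (L (vec m - vec u)) then f@_m else 0).

Lemma psiD u D f g : psi u D (f + g) = psi u D f + psi u D g.
Proof.
rewrite /psi -big_split; apply: eq_bigr => m _; case: ifP => _ /=; [exact: mcoeffD | by rewrite addr0].
Qed.
Lemma psi0 u D : psi u D 0 = 0.
Proof. by rewrite /psi big1 // => m _; case: ifP => _; rewrite ?mcoeff0. Qed.
Lemma psiZ u D c f : psi u D (c *: f) = c * psi u D f.
Proof.
rewrite /psi mulr_sumr; apply: eq_bigr => m _; case: ifP => _; by rewrite ?mcoeffZ ?mulr0.
Qed.
Lemma psiB u D f g : psi u D (f - g) = psi u D f - psi u D g.
Proof.
have -> : f - g = f + (-1) *: g by rewrite scaleN1r.
by rewrite psiD psiZ mulN1r.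
Qed.
Lemma psi_sum u D (I : Type) (r : seq I) (F : I -> {mpoly K[s]}) :
  psi u D (\sum_(i <- r) F i) = \sum_(i <- r) psi u D (F i).
Proof.
elim: r => [|x r IH]; first by rewrite !big_nil psi0.
by rewrite !big_cons psiD IH.
Qed.

Lemma psiX_lt u D m (hm : (mdeg m < D)%N) :
  psi u D 'X_[m] = if dec (L (vec m - vec u)) then 1 else 0.
Proof.
rewrite /psi (bigD1 (BMultinom hm)) //= mcoeffX eqxx big1 ?addr0 //.
move=> m' ne; case: ifP => // _; rewrite mcoeffX.
case: eqP => // E; move: ne; suff -> : m' = BMultinom hm by rewrite eqxx.
by apply: val_inj; rewrite /= E.
Qed.
Lemma psiX_ge u D m : ~~ (mdeg m < D)%N -> psi u D 'X_[m] = 0.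
Proof.
move=> hm; rewrite /psi big1 // => m' _; case: ifP => // _; rewrite mcoeffX.
case: eqP => // E; move: hm; rewrite E; by rewrite bmdeg.
Qed.

Lemma latE x y : L (x - y) -> (L x <-> L y).
Proof.
move=> Hxy; split => H.
  by have := latB hL H Hxy; rewrite opprB addrC subrK.
by have := latD hL H Hxy; rewrite addrC subrK.
Qed.

Lemma psi_kill u D c a : L a -> psi u D (c * (tpos K a - tneg K a)) = 0.
Proof.
move=> La.
have hdeg : mdeg (mpos a) = mdeg (mneg a).
  have := hsum La; rewrite sum_posn_negn => /eqP; rewrite subr_eq0 => /eqP [E].
  by rewrite !mdegE; under eq_bigr do rewrite mnmE; under [RHS]eq_bigr do rewrite mnmE.
rewrite tposE tnegE [c]mpolyE mulr_suml psi_sum big1 // => w _.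
rewrite -scalerAl psiZ mulrBr -!mpolyXD psiB.
have [lt|ge] := boolP (mdeg (w + mpos a) < D)%N.
  have lt' : (mdeg (w + mneg a) < D)%N by rewrite mdegD -hdeg -mdegD.
  rewrite (psiX_lt _ lt) (psiX_lt _ lt').
  have E : L (vec (w + mpos a) - vec u) <-> L (vec (w + mneg a) - vec u).
    apply: latE; have -> : vec (w + mpos a) - vec u - (vec (w + mneg a) - vec u) = a.
      by rewrite !vecD zaux vec_posneg.
    exact: La.
  case: (boolP (dec (L (vec (w + mpos a) - vec u)))) => h1;
  case: (boolP (dec (L (vec (w + mneg a) - vec u)))) => h2; rewrite ?subrr ?mulr0 //.
    by move: h2 => /negP; case; apply/decP/E/decP.
  by move: h1 => /negP; case; apply/decP/E/decP.
have ge' : ~~ (mdeg (w + mneg a) < D)%N by rewrite mdegD -hdeg -mdegD.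
by rewrite (psiX_ge _ ge) (psiX_ge _ ge') subrr mulr0.
Qed.

Lemma lat_detect b : @lattice_ideal K s L (tpos K b - tneg K b) -> L b.
Proof.
move=> [r [Hr E]]; apply: NNPP => nLb.
pose u := mpos b; pose D := (mdeg u).+1.
have : psi u D (tpos K b - tneg K b) = 0.
  rewrite E psi_sum big_seq big1 // => cg cgr.
  have [a [La ->]] := Hr cg cgr; exact: psi_kill.
rewrite psiB tposE tnegE (@psiX_lt u D u) // subrr.
have -> : dec (L 0) by apply/decP; apply: lat0.
have -> : psi u D 'X_[mneg b] = 0.
  have [lt|ge] := boolP (mdeg (mneg b) < D)%N; last by rewrite psiX_ge.
  rewrite psiX_lt //; case: (boolP (dec _)) => // /decP H; case: nLb.
  by have := latN hL H; rewrite opprB vec_posneg.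
by rewrite subr0 => /eqP; rewrite oner_eq0.
Qed.
End Psi.

Lemma mmap_comp (n : nat) (R : ringType) (S T : comRingType) (f : {rmorphism R -> S})
  (g : {rmorphism S -> T}) (h : 'I_n -> S) (p : {mpoly R[n]}) :
  g (mmap f h p) = mmap (g \o f) (g \o h) p.
Proof.
rewrite /mmap rmorph_sum; apply: eq_bigr => m _; rewrite rmorphM /mmap1 rmorph_prod.
by congr (_ * _); apply: eq_bigr => i _; rewrite rmorphXn.
Qed.

Lemma mmap_ext (n : nat) (R : ringType) (S : ringType) (f1 f2 : R -> S)
  (h1 h2 : 'I_n -> S) (p : {mpoly R[n]}) :
  f1 =1 f2 -> h1 =1 h2 -> mmap f1 h1 p = mmap f2 h2 p.
Proof.
move=> ef eh; rewrite /mmap; apply: eq_bigr => m _; rewrite ef; congr (_ * _).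
exact: mmap1_eq.
Qed.

Section Chain.
Variables (K : fieldType) (s : nat) (hs : (2 <= s)%N) (L : 'rV[int]_s -> Prop)
  (hsum : forall a, L a -> \sum_i a 0 i = 0)
  (c : 'I_s -> nat) (hc : forall a, L a -> \sum_j a 0 j * (c j)%:Z = 0)
  (i0 : 'I_s) (hi0 : c i0 != c (jn hs)).

Definition phixy : {rmorphism {mpoly K[s]} -> {poly {poly K}}} :=
  mmap ((@polyC {poly K}) \o (@polyC K)) (fun j : 'I_s => ('X^(c j))%:P * 'X).
Definition phx : {rmorphism {mpoly K[s]} -> {poly K}} :=
  mmap (@polyC K) (fun _ : 'I_s => 'X).
Definition ev0 : {rmorphism {mpoly K[s]} -> K} :=
  mmap idfun (fun _ : 'I_s => (0 : K)).

Lemma phixyX j : phixy 'X_j = ('X^(c j))%:P * 'X.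
Proof. by rewrite /= [LHS]mmapX mmap1U. Qed.
Lemma phxX j : phx 'X_j = 'X.
Proof. by rewrite /= [LHS]mmapX mmap1U. Qed.
Lemma ev0X j : ev0 'X_j = 0.
Proof. by rewrite /= [LHS]mmapX mmap1U. Qed.

Lemma phx_phixy p : phx p = map_poly (horner_eval (1 : K)) (phixy p).
Proof.
rewrite /= mmap_comp; apply: mmap_ext => [k|j] /=.
  by rewrite map_polyC /= horner_evalE hornerC.
by rewrite rmorphM /= map_polyC map_polyX /= horner_evalE hornerXn expr1n mul1r.
Qed.
Lemma ev0_phx p : ev0 p = horner_eval (0 : K) (phx p).
Proof.
rewrite /= mmap_comp; apply: mmap_ext => [k|j] /=; rewrite horner_evalE.
  by rewrite hornerC.
by rewrite hornerX.
Qed.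

Lemma sum_posn_negn_c (a : 'rV[int]_s) :
  \sum_j a 0 j * (c j)%:Z =
  (\sum_j posn (a 0%R j) * c j)%N%:Z - (\sum_j negn (a 0%R j) * c j)%N%:Z.
Proof.
rewrite -!sum_posz -sumrB; apply: eq_bigr => j _.
by rewrite {1}(posn_negn (a 0 j)) mulrBl !PoszM.
Qed.

Lemma prodXc (k : 'I_s -> nat) :
  \prod_j (('X^(c j))%:P * 'X) ^+ k j =
  ('X^(\sum_j k j * c j)%N)%:P * ('X : {poly {poly K}}) ^+ (\sum_j k j)%N.
Proof.
under eq_bigr do rewrite exprMn.
rewrite big_split /= prodrXr; congr (_ * _).
rewrite -prodrXr rmorph_prod; apply: eq_bigr => j _.
by rewrite -rmorphXn /= mulnC exprM.
Qed.

Lemma phixy_bin a : L a -> phixy (tpos K a - tneg K a) = 0.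
Proof.
move=> La; rewrite rmorphB rmorph_tpos rmorph_tneg.
under eq_bigr do rewrite phixyX.
under [X in _ - X]eq_bigr do rewrite phixyX.
rewrite !prodXc.
have := hsum La; rewrite sum_posn_negn => /eqP; rewrite subr_eq0 => /eqP [E1].
have := hc La; rewrite sum_posn_negn_c => /eqP; rewrite subr_eq0 => /eqP [E2].
by rewrite E1 E2 subrr.
Qed.

Lemma chain2 : prime_chain_over (@lattice_ideal K s L) 2.
Proof.
pose P (k : nat) : {mpoly K[s]} -> Prop :=
  match k with 0 => fun p => phixy p = 0 | 1 => fun p => phx p = 0 | _ => fun p => ev0 p = 0 end.
have I0 : forall p, @lattice_ideal K s L p -> phixy p = 0.
  move=> p Ip; have H := ideal_gen_min (ker_prime phixy).1; apply: H Ip => g [a [La ->]].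
  exact: phixy_bin.
have I1 : forall p, phixy p = 0 -> phx p = 0.
  by move=> p h; rewrite phx_phixy h rmorph0.
have I2 : forall p, phx p = 0 -> ev0 p = 0.
  by move=> p h; rewrite ev0_phx h rmorph0.
exists P; split.
  case=> [|[|k]] _ /=.
  - by split; [exact: ker_prime | exact: I0].
  - by split; [exact: ker_prime | move=> p /I0; exact: I1].
  - by split; [exact: ker_prime | move=> p /I0 /I1; exact: I2].
case=> [|[|k]] // _ /=; split.
- exact: I1.
- exists ('X_i0 - 'X_(jn hs)); rewrite !rmorphB /= !phxX !phixyX subrr; split => //.
  rewrite -mulrBl -rmorphB => /eqP; rewrite mulf_eq0 polyX_eq0 orbF polyC_eq0 subr_eq0.
  move=> /eqP /(congr1 (fun q : {poly K} => size q)); rewrite !size_polyXn => -[E].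
  by move: hi0; rewrite E eqxx.
- exact: I2.
- exists ('X_(jn hs)); rewrite ev0X phxX; split => //.
  by move=> /eqP; rewrite polyX_eq0.
Qed.
End Chain.

Lemma sum_delta (s : nat) (F : 'I_s -> int) i : \sum_j ((j == i)%:R * F j) = F i.
Proof.
rewrite (bigD1 i) //= eqxx mul1r big1 ?addr0 // => j /negbTE ->; by rewrite mul0r.
Qed.

Lemma prodX1 (K : fieldType) (s : nat) (i : 'I_s) :
  \prod_k ('X_k : {mpoly K[s]}) ^+ (k == i) = 'X_i.
Proof.
rewrite (bigD1 i) //= eqxx expr1 big1 ?mulr1 // => j /negbTE ->; by rewrite expr0.
Qed.

Theorem corollary3p20 (K : fieldType) (s : nat) (hs : (2 <= s)%N)
  (L : 'rV[int]_s -> Prop) (hL : is_lattice L)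
  (hgr : graded_ideal (@lattice_ideal K s L))
  (hdim : krull_dim_quot (@lattice_ideal K s L) 1) :
  torsion_free_quot L <->
  (forall p : {mpoly K[s]}, @lattice_ideal K s L p <-> ideal_gen (@diff_gens K s) p).
Proof.
have hsum := lat_sum0 hgr.
set j0 := jn hs.
have hdelta : forall i : 'I_s, i != j0 ->
    'X_i - 'X_j0 = tpos K (delta_mx 0 i - delta_mx 0 j0) - tneg K (delta_mx 0 i - delta_mx 0 j0) :> {mpoly K[s]}.
  move=> i ne; have ne' : j0 != i by rewrite eq_sym.
  rewrite /tpos /tneg -(prodX1 K i) -(prodX1 K j0); congr (_ - _);
  apply: eq_bigr => k _; rewrite !mxE /=; congr (_ ^+ _);
  case Eki: (k == i); case Ekj: (k == j0) => //;
  by move: ne; rewrite -(eqP Eki) Ekj.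
split.
- move=> tf.
  have Hgen : forall i : 'I_s, L (delta_mx 0 i - delta_mx 0 j0).
    move=> i; apply: NNPP => nL.
    have Hv : forall m : int, m != 0 -> ~ L (m *: (delta_mx 0 i - delta_mx 0 j0)).
      by move=> m m0 Lm; apply: nL; exact: tf _ m m0 Lm.
    have [c0 [hc0 hv]] := LA hL Hv.
    have hv' : c0 i != c0 j0.
      move: hv; apply: contra => /eqP E.
      rewrite (eq_bigr (fun j => (j == i)%:R * c0 j - (j == j0)%:R * c0 j)).
        by rewrite sumrB !sum_delta E subrr.
      by move=> j _; rewrite !mxE /= -mulrBl.
    pose N : int := \sum_j `|c0 j|.
    have Npos : forall j, 0 <= c0 j + N.
      move=> j; rewrite /N (bigD1 j) //= addrA.
      have /andP[h1 _] : - `|c0 j| <= c0 j <= `|c0 j| by rewrite -ler_norml.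
      have h2 : 0 <= \sum_(k | k != j) `|c0 k| by apply: sumr_ge0.
      apply: addr_ge0 => //; by rewrite -[`|c0 j|]opprK subr_ge0.
    pose c (j : 'I_s) : nat := absz (c0 j + N).
    have cE : forall j, (c j)%:Z = c0 j + N by move=> j; rewrite /c gez0_abs.
    have hc : forall a, L a -> \sum_j a 0 j * (c j)%:Z = 0.
      move=> a La; under eq_bigr do rewrite cE mulrDr.
      by rewrite big_split /= hc0 // -mulr_suml hsum // mul0r addr0.
    have hci : c i != c j0.
      apply: contra hv' => /eqP E; apply/eqP.
      by apply: (@addIr _ N); rewrite -!cE E.
    apply: (hdim.2); exact: (@chain2 K s hs L hsum c hc i hci).
  split.
    move=> Ip; have H := ideal_gen_min (@J_ideal K s); apply: H Ip => g [a [La ->]].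
    exact: binJ (hsum a La).
  move=> Jp; have H := ideal_gen_min (@ideal_gen_ideal K s _); apply: H Jp.
  move=> g [i [j [hi [hj ->]]]].
  have -> : j = j0 by apply: val_inj.
  have ne : i != j0 by rewrite -(inj_eq val_inj) /= neq_ltn hi.
  by rewrite hdelta //; apply: ideal_gen_in; exists (delta_mx 0 i - delta_mx 0 j0).
- move=> hJ v m m0 Lmv.
  have sv : \sum_i v 0 i = 0.
    have := hsum _ Lmv; under eq_bigr do rewrite mxE.
    by rewrite -mulr_sumr => /eqP; rewrite mulf_eq0 (negbTE m0) => /eqP.
  apply: (lat_detect hL hsum); apply/hJ; exact: binJ.
Qed.
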